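(* If MAPTree is stopped early (by the time budget) after at least one iteration of its main loop, its output is a minimum-cost solution graph among all solution graphs of $\mathcal G_{\mathcal X,\mathcal Y}$ contained in the explored node set $\mathcal G'$.
   Context: Let $x_1,\dots,x_N\in\{0,1\}^F$ be a binary dataset $\mathcal X$ with labels $\mathcal Y\in\{0,1\}^N$, $[N]=\{1,\dots,N\}$. For $\mathcal I\subseteq[N]$, $f\in[F]$, $k\in\{0,1\}$ let $\mathcal I|_{f=k}=\{i\in\mathcal I:(x_i)_f=k\}$, $c^k(\mathcal I)=|\{i\in\mathcal I:y_i=k\}|$, $\mathcal V(\mathcal I)=\{f:\mathcal I|_{f=0}\neq\emptyset\text{ and }\mathcal I|_{f=1}\neq\emptyset\}$. Fix $\rho^1,\rho^0>0$, $\alpha\in(0,1)$, $\beta\ge0$; $\ell_{\rm leaf}(c^1,c^0)=B(c^1+\rho^1,c^0+\rho^0)/B(\rho^1,\rho^0)$ ($B$ the Beta function), $p_{\rm split}(d)=\alpha(1+d)^{-\beta}$, $p_{\rm leaf}(d,\mathcal I)=1$ if $\mathcal V(\mathcal I)=\emptyset$ else $1-p_{\rm split}(d)$, $p_{\rm inner}(d,\mathcal I)=0$ if $\mathcal V(\mathcal I)=\emptyset$ else $p_{\rm split}(d)/|\mathcal V(\mathcal I)|$; $-\log0=+\infty$, and a minimum over an empty set is $+\infty$. Graph $\mathcal G=\mathcal G_{\mathcal X,\mathcal Y}$: for nonempty $\mathcal I\subseteq[N]$, $d\in\{0,\dots,F\}$, an OR node $o_{\mathcal I,d}$ with terminal child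 $t_{\mathcal I,d}$ (edge cost $-\log p_{\rm leaf}(d,\mathcal I)-\log\ell_{\rm leaf}(c^1(\mathcal I),c^0(\mathcal I))$); for $d<F$, $f\in\mathcal V(\mathcal I)$, an AND child $a_{\mathcal I,d,f}$ (edge cost $-\log p_{\rm inner}(d,\mathcal I)$) with cost-$0$ edges to $o_{\mathcal I|_{f=0},d+1}$, $o_{\mathcal I|_{f=1},d+1}$; root $r=o_{[N],0}$; only nodes reachable from $r$ kept. A solution graph is a node set $\mathcal S\ni r$, all of whose nodes are reachable from $r$ inside $\mathcal S$, with every AND node of $\mathcal S$ having both children in $\mathcal S$ and every OR node of $\mathcal S$ exactly one child in $\mathcal S$; its cost is the sum of costs of edges $u\to v$ with $u,v\in\mathcal S$. Heuristic: $h(o_{\mathcal I,d})=-\max\{\log\ell_{\rm leaf}(c^1(\mathcal I),c^0(\mathcal I)),\log p_{\rm split}(d)+\log\ell_{\rm leaf}(c^1(\mathcal I),0)+\log\ell_{\rm leaf}(0,c^0(\mathcal I))\}$. MAPTree maintains a node set $\mathcal G'$, a set $\mathcal E$ of expanded OR nodes, and values $LB[u],UB[u]\in\mathbb R\cup\{+\infty\}$ for OR nodes ($UB[u]=+\infty$ until set); for an AND node $a$ with children $o_0,o_1$, $LB[a]=LB[o_0]+LB[o_1]$ and $UB[a]=UB[o_0]+UB[o_1]$. Initialize $\mathcal G'=\{r\}$, $\mathcal E=\emptyset$, $LB[r]=h(r)$, $UB[r]=+\infty$. While $LB[r]<UB[r]$ and time remains: (1) $o:=r$; while $o\in\mathcal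 E$, choose an AND child $a^*$ of $o$ minimizing $\mathrm{cost}(o,a)+LB[a]$, with children $o_0$ (value-0 side) and $o_1$, and set $o:=o_0$ if $UB[o_0]-LB[o_0]>UB[o_1]-LB[o_1]$, else $o:=o_1$. (2) Add $o$ to $\mathcal E$ and its terminal child to $\mathcal G'$; for each AND child $a$ of $o$ with children $o_0,o_1$, add $a,o_0,o_1$ to $\mathcal G'$ and set $LB[o_0]:=h(o_0)$, $LB[o_1]:=h(o_1)$. (3) Starting from $Q=\{o\}$, repeatedly remove from $Q$ an OR node $u$ of maximal depth, compute $v=\min\{\min_a(\mathrm{cost}(u,a)+LB[a]),\mathrm{cost}(u,t_u)\}$ over the AND children $a$ and terminal child $t_u$ of $u$; if $v>LB[u]$, set $LB[u]:=v$ and add to $Q$ every OR node of $\mathcal G'$ that is the parent of an AND node of $\mathcal G'$ having $u$ as child. (4) The same with $UB$ in place of $LB$, updating when $v<UB[u]$. Output $\mathrm{getSolution}(r)$, where for an OR node $u$ with terminal child $t$: if $u$ has no AND child or $\mathrm{cost}(u,t)\le\min_a(\mathrm{cost}(u,a)+UB[a])$, return $\{u,t\}$; else, with $a^*$ attaining the minimum and children $u_0,u_1$, return $\{u,a^*\}\cup\mathrm{getSolution}(u_0)\cup\mathrm{getSolution}(u_1)$. *)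

(* Defs.v *)
From HB Require Import structures.
From mathcomp Require Import all_boot all_order all_algebra.
From mathcomp Require Import all_classical all_reals.
From mathcomp Require Import ereal topology normedtype sequences exp measure.
From mathcomp Require Import lebesgue_measure lebesgue_integral.

Set Implicit Arguments.
Unset Strict Implicit.
Unset Printing Implicit Defensive.

Import Order.TTheory GRing.Theory Num.Theory.

(*   OR node       o_{I,d}     ~  OrN (I, d)                                 *)
(*   terminal node t_{I,d}     ~  TermN (I, d)                               *)
(*   AND node      a_{I,d,f}   ~  AndN ((I, d), f)                           *)
(* with I : {set 'I_N} (a subset of [N], 0-indexed), d : 'I_F.+1 (a depth in  *)
(* {0,...,F}) and f : 'I_F (a feature, 0-indexed).                           *)

Definition onode (N F : nat) := ({set 'I_N} * 'I_F.+1)%type.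
Definition anode (N F : nat) := ({set 'I_N} * 'I_F.+1 * 'I_F)%type.

Inductive node (N F : nat) :=
| OrN of onode N F
| TermN of onode N F
| AndN of anode N F.

Definition node_code N F (u : node N F) : (onode N F + onode N F) + anode N F :=
  match u with OrN o => inl (inl o) | TermN o => inl (inr o) | AndN a => inr a end.
Definition node_decode N F (c : (onode N F + onode N F) + anode N F) : node N F :=
  match c with inl (inl o) => OrN o | inl (inr o) => TermN o | inr a => AndN a end.
Lemma node_codeK N F : cancel (@node_code N F) (@node_decode N F).
Proof. by case. Qed.

HB.instance Definition _ N F := Finite.copy (node N F) (can_type (@node_codeK N F)).

Local Open Scope ring_scope.

Definition BetaF {R : realType} (a b : R) : R :=
  \int[@lebesgue_measure R]_(t in `]0%R, 1%R[) (t `^ (a - 1) * (1 - t) `^ (b - 1)).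

Section MAPTree.
Context {R : realType} (N F : nat) (X : 'I_N -> 'I_F -> bool) (Y : 'I_N -> bool)
        (rho1 rho0 alpha beta : R).

Local Notation onode := (onode N F).
Local Notation anode := (anode N F).
Local Notation node := (node N F).

Definition restrict (I : {set 'I_N}) (f : 'I_F) (k : bool) : {set 'I_N} :=
  [set i in I | X i f == k].
Definition cnt1 (I : {set 'I_N}) : nat := #|[set i in I | Y i]|.
Definition cnt0 (I : {set 'I_N}) : nat := #|[set i in I | ~~ Y i]|.
Definition Vset (I : {set 'I_N}) : {set 'I_F} :=
  [set f | (restrict I f false != finset.set0) && (restrict I f true != finset.set0)].

Definition depth (o : onode) : nat := o.2.
Definition child (a : anode) (k : bool) : onode :=
  (restrict a.1.1 a.2 k, inord a.1.2.+1).

Definition edge : rel node := fun u v =>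
  match u, v with
  | OrN o, TermN o' => o' == o
  | OrN o, AndN a => [&& a.1 == o, (o.2 < F)%N & a.2 \in Vset o.1]
  | AndN a, OrN o => (o == child a false) || (o == child a true)
  | _, _ => false
  end.

Definition mroot : onode := ([set: 'I_N], ord0).

Definition inG (v : node) : bool := connect edge (OrN mroot) v.

Definition ell_leaf (c1 c0 : nat) : R :=
  BetaF (c1%:R + rho1) (c0%:R + rho0) / BetaF rho1 rho0.
Definition p_split (d : nat) : R := alpha * (1 + d%:R) `^ (- beta).
Definition p_leaf (o : onode) : R :=
  if Vset o.1 == finset.set0 then 1 else 1 - p_split o.2.
Definition p_inner (o : onode) : R :=
  if Vset o.1 == finset.set0 then 0 else p_split o.2 / #|Vset o.1|%:R.

Definition tcost (o : onode) : R :=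
  - ln (p_leaf o) - ln (ell_leaf (cnt1 o.1) (cnt0 o.1)).
(* cost of the edge o_{I,d} -> a_{I,d,f}  (p_inner > 0 whenever this edge exists) *)
Definition acost (a : anode) : R := - ln (p_inner a.1).

Definition ecost (u v : node) : R :=
  match u, v with
  | OrN o, TermN _ => tcost o
  | OrN _, AndN a => acost a
  | _, _ => 0
  end.

Definition heur (o : onode) : R :=
  - Num.max (ln (ell_leaf (cnt1 o.1) (cnt0 o.1)))
            (ln (p_split o.2) + ln (ell_leaf (cnt1 o.1) 0) + ln (ell_leaf 0 (cnt0 o.1))).

Definition is_solution (S : {set node}) : Prop :=
  [/\ OrN mroot \in S,
      (forall v, v \in S -> inG v),
      (forall v, v \in S ->
         connect [rel x y | [&& edge x y, x \in S & y \in S]] (OrN mroot) v),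
      (forall a v, AndN a \in S -> edge (AndN a) v -> v \in S) &
      (forall o, OrN o \in S -> #|[set v in S | edge (OrN o) v]| = 1%N)].

Definition solcost (S : {set node}) : R :=
  \sum_(u in S) \sum_(v in S | edge u v) ecost u v.

Local Open Scope ereal_scope.

Record state := State {
  Gp : {set node};
  Ex : {set onode};
  LB : onode -> \bar R;
  UB : onode -> \bar R }.

Definition valA (val : onode -> \bar R) (a : anode) : \bar R :=
  val (child a false) + val (child a true).

Definition kidA (G' : {set node}) (o : onode) (a : anode) : bool :=
  edge (OrN o) (AndN a) && (AndN a \in G').

Definition init_state : state :=
  State [set OrN mroot] finset.set0 (fun o => (heur o)%:E) (fun _ => +oo).

Definition guard (s : state) : bool := LB s mroot < UB s mroot.

Inductive descend (s : state) : onode -> onode -> Prop :=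
| descend_stop (o : onode) : o \notin Ex s -> descend s o o
| descend_step (o : onode) (a : anode) (o' o'' : onode) :
    o \in Ex s -> kidA (Gp s) o a ->
    (forall a', kidA (Gp s) o a' ->
       (acost a)%:E + valA (LB s) a <= (acost a')%:E + valA (LB s) a') ->
    o' = (if UB s (child a true) - LB s (child a true)
             < UB s (child a false) - LB s (child a false)
          then child a false else child a true) ->
    descend s o' o'' -> descend s o o''.

Definition expand (s : state) (o : onode) : state :=
  State (Gp s :|: [set TermN o]
              :|: [set v | [exists a, edge (OrN o) (AndN a) &&
                    [|| v == AndN a, v == OrN (child a false) | v == OrN (child a true)]]])
        (o |: Ex s)
        (fun u => if [exists a, edge (OrN o) (AndN a) &&
                        ((u == child a false) || (u == child a true))]
                  then (heur u)%:E else LB s u)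
        (UB s).

Definition minval (G' : {set node}) (val : onode -> \bar R) (u : onode) : \bar R :=
  \big[Order.min/(tcost u)%:E]_(a | kidA G' u a) ((acost a)%:E + valA val a).

Definition parentsOf (G' : {set node}) (u : onode) : {set onode} :=
  [set p | (OrN p \in G') &&
           [exists a, [&& AndN a \in G', edge (OrN p) (AndN a) & edge (AndN a) (OrN u)]]].

(* steps (3)/(4): propagation; [upd new old] says whether to update *)
Inductive propagate (G' : {set node}) (upd : \bar R -> \bar R -> bool) :
    {set onode} -> (onode -> \bar R) -> (onode -> \bar R) -> Prop :=
| propagate_done (val : onode -> \bar R) : propagate G' upd finset.set0 val val
| propagate_step (Q : {set onode}) (val val' : onode -> \bar R) (u : onode) :
    u \in Q -> (forall u', u' \in Q -> (depth u' <= depth u)%N) ->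
    propagate G' upd
      (if upd (minval G' val u) (val u) then (Q :\ u) :|: parentsOf G' u else Q :\ u)
      (if upd (minval G' val u) (val u)
       then (fun x => if x == u then minval G' val u else val x) else val)
      val' ->
    propagate G' upd Q val val'.

Definition upd_LB (v old : \bar R) : bool := old < v.
Definition upd_UB (v old : \bar R) : bool := v < old.

Definition iteration (s s' : state) : Prop :=
  exists o, descend s mroot o /\
    exists LB' UB',
      propagate (Gp (expand s o)) upd_LB [set o] (LB (expand s o)) LB' /\
      propagate (Gp (expand s o)) upd_UB [set o] (UB (expand s o)) UB' /\
      s' = State (Gp (expand s o)) (Ex (expand s o)) LB' UB'.

Definition minUB (s : state) (u : onode) : \bar R :=
  \big[Order.min/+oo]_(a | kidA (Gp s) u a) ((acost a)%:E + valA (UB s) a).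

Inductive getSolution (s : state) : onode -> {set node} -> Prop :=
| getSolution_leaf (u : onode) :
    (tcost u)%:E <= minUB s u -> getSolution s u [set OrN u; TermN u]
| getSolution_inner (u : onode) (a : anode) (S0 S1 : {set node}) :
    minUB s u < (tcost u)%:E -> kidA (Gp s) u a ->
    (acost a)%:E + valA (UB s) a = minUB s u ->
    getSolution s (child a false) S0 -> getSolution s (child a true) S1 ->
    getSolution s u ([set OrN u; AndN a] :|: S0 :|: S1).

End MAPTree.

(* Main.v *)
Require Import Defs.
From HB Require Import structures.
From mathcomp Require Import all_boot all_order all_algebra.
From mathcomp Require Import all_classical all_reals.
From mathcomp Require Import ereal topology normedtype sequences exp measure.
From mathcomp Require Import lebesgue_measure lebesgue_integral.
From mathcomp Require Import ssrbool eqtype ssrnat seq fintype finset bigop.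
Import Order.TTheory GRing.Theory Num.Theory.
Local Open Scope ring_scope.

Section Proof.
Context {R : realType} (N F : nat) (X : 'I_N -> 'I_F -> bool) (Y : 'I_N -> bool)
        (rho1 rho0 alpha beta : R).

Local Notation node := (Defs.node N F).
Local Notation onode := (Defs.onode N F).
Local Notation anode := (Defs.anode N F).
Local Notation edge := (Defs.edge X).
Local Notation child := (Defs.child X).
Local Notation Vset := (Defs.Vset X).
Local Notation kidA := (Defs.kidA X).
Local Notation parentsOf := (Defs.parentsOf X).
Local Notation valA := (Defs.valA X).
Local Notation minval := (Defs.minval X Y rho1 rho0 alpha beta).
Local Notation tcost := (Defs.tcost X Y rho1 rho0 alpha beta).
Local Notation acost := (Defs.acost X alpha beta).
Local Notation minUB := (Defs.minUB X alpha beta).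
Local Notation getSolution := (Defs.getSolution X Y rho1 rho0 alpha beta).
Local Notation solcost := (Defs.solcost X Y rho1 rho0 alpha beta).
Local Notation ecost := (Defs.ecost X Y rho1 rho0 alpha beta).
Local Notation root := (Defs.mroot N F).
Local Notation sstate := (@state R N F).
Definition nset (v : node) : {set 'I_N} :=
  match v with OrN o => o.1 | TermN o => o.1 | AndN a => a.1.1 end.

Lemma restrict_sub I f b : Defs.restrict X I f b \subset I.
Proof. by apply/subsetP => i; rewrite inE => /andP[]. Qed.

Lemma edge_nset (v w : node) : edge v w -> nset w \subset nset v.
Proof.
case: v => [o|o|a]; case: w => [o'|o'|a'] //=.
- by move/eqP->.
- by case/and3P => /eqP <- _ _.
- by case/orP => /eqP -> ; apply: restrict_sub.
Qed.

Lemma edge_O_nset (o : onode) (w : node) : edge (OrN o) w -> nset w = o.1.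
Proof. by case: w => [o'|o'|a'] //= => [/eqP->|/and3P[/eqP<- _ _]]. Qed.

Lemma edge_OA (o : onode) (a : anode) : edge (OrN o) (AndN a) -> [/\ a.1 = o, (o.2 < F)%N & a.2 \in Vset o.1].
Proof. by case/and3P => /eqP. Qed.

Lemma child_nonempty (a : anode) (k : bool) : a.2 \in Vset a.1.1 -> (child a k).1 != set0.
Proof. by rewrite inE => /andP[h0 h1]; case: k. Qed.

Lemma child_disj (a : anode) : [disjoint (child a false).1 & (child a true).1].
Proof.
rewrite -setI_eq0; apply/eqP/setP => i; rewrite !inE.
by case: (X i a.2); rewrite !andbF.
Qed.

Lemma child_sub (a : anode) (k : bool) : (child a k).1 \subset a.1.1.
Proof. exact: restrict_sub. Qed.

Lemma child_depth (a : anode) (k : bool) : (a.1.2 < F)%N -> ((child a k).2 : nat) = a.1.2.+1.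
Proof. by move=> h; rewrite /child /= inordK. Qed.

Lemma disj_ne (A B : {set 'I_N}) : [disjoint A & B] -> A != set0 -> A != B.
Proof.
move=> d nA; apply/eqP => AB; move: d; rewrite -AB -setI_eq0 setIid.
by rewrite (negbTE nA).
Qed.

Lemma child_neq (a : anode) : a.2 \in Vset a.1.1 -> child a false != child a true.
Proof.
move=> h; have := disj_ne _ _ (child_disj a) (child_nonempty a false h).
by apply: contraNneq => ->.
Qed.

Arguments edge_OA {o a}.
Arguments edge_nset {v w}.
Arguments edge_O_nset {o w}.
Arguments child_depth {a} k.

Lemma OrN_eq (o o' : onode) : (OrN o == OrN o' :> node) = (o == o').
Proof. by apply/eqP/eqP => [[]|->]. Qed.
Local Open Scope ereal_scope.

Lemma Noo_add (x y : \bar R) : -oo < x -> -oo < y -> -oo < x + y.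
Proof. by case: x => [x||] //; case: y => [y||] // _ _; rewrite -EFinD ltNyr. Qed.

Lemma minval_le_tcost G val u : minval G val u <= (tcost u)%:E.
Proof. exact: bigmin_le_id. Qed.

Lemma minval_le_kid G val u a : kidA G u a -> minval G val u <= (acost a)%:E + valA val a.
Proof. by move=> h; apply: bigmin_le_cond. Qed.

Lemma minval_mono G (v1 v2 : onode -> \bar R) u :
  (forall x, v1 x <= v2 x) -> minval G v1 u <= minval G v2 u.
Proof.
move=> h; apply: le_bigmin2 => a _; apply: leeD => //; apply: leeD; exact: h.
Qed.

Arguments minval_mono {G v1 v2 u}.

Lemma minval_ext G (v1 v2 : onode -> \bar R) u :
  (forall a k, kidA G u a -> v1 (child a k) = v2 (child a k)) ->
  minval G v1 u = minval G v2 u.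
Proof.
by move=> h; apply: eq_bigr => a ka; rewrite /Defs.valA !h.
Qed.

Lemma minval_Noo G (val : onode -> \bar R) u :
  (forall x, -oo < val x) -> -oo < minval G val u.
Proof.
move=> h; apply/bigmin_gtP; split; first exact: ltNyr.
by move=> a _; rewrite /Defs.valA; apply: Noo_add; [exact: ltNyr|apply: Noo_add].
Qed.

Lemma bigmin_split_id (I : finType) (P : pred I) (f : I -> \bar R) (x : \bar R) :
  \big[Order.min/x]_(i | P i) f i = Order.min x (\big[Order.min/+oo]_(i | P i) f i).
Proof.
elim/big_rec2: _ => [|i y1 y2 _ ->]; first by rewrite (minEle x +oo) leey.
by rewrite minCA.
Qed.

Lemma minval_minUB (s : sstate) u :
  minval (Gp s) (UB s) u = Order.min (tcost u)%:E (minUB s u).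
Proof. exact: bigmin_split_id. Qed.
Definition prop_ok (G : {set node}) (E : {set onode}) :=
  (forall p, p \in E -> OrN p \in G) /\
  (forall a, AndN a \in G -> a.1 \in E /\ edge (OrN a.1) (AndN a)).

Lemma parentsOf_sub G E u : prop_ok G E -> parentsOf G u \subset E.
Proof.
case=> _ h2; apply/subsetP => p; rewrite inE => /andP[_ /existsP[a /and3P[aG ep _]]].
have [e1 _ _] := edge_OA ep; have [h _] := h2 a aG; by rewrite -e1.
Qed.

Lemma edge_child (a : anode) (k : bool) : edge (AndN a) (OrN (child a k)).
Proof. by case: k; rewrite /= eqxx ?orbT. Qed.

Lemma notparent G E u p a k : prop_ok G E -> p \notin parentsOf G u ->
  kidA G p a -> child a k != u.
Proof.
move=> [h1 h2] np /andP[ep aG]; apply: contra np => /eqP cu.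
have [e1 _ _] := edge_OA ep.
have pG : OrN p \in G by rewrite -e1; apply: h1; have [] := h2 a aG.
rewrite /Defs.parentsOf inE pG /=.
by apply/existsP; exists a; apply/and3P; split => //; rewrite -cu; exact: edge_child.
Qed.

Arguments notparent {G E u p a} k.
Arguments parentsOf_sub {G E} u.

Lemma kid_not_self G u a k : kidA G u a -> child a k != u.
Proof.
move=> /andP[/edge_OA[e1 lt _] _]; apply/eqP => h.
have := child_depth (a:=a) k; rewrite e1 => /(_ lt); rewrite h => H.
exact: (n_Sn _ H).
Qed.

Arguments kid_not_self {G u a} k.

Lemma propagate_UB G E Q (val val' : onode -> \bar R) :
  propagate X Y rho1 rho0 alpha beta G upd_UB Q val val' ->
  prop_ok G E -> Q \subset E ->
  (forall x, -oo < val x) ->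
  (forall p, p \in E -> minval G val p <= val p) ->
  (forall p, p \in E -> p \notin Q -> val p = minval G val p) ->
  [/\ forall x, -oo < val' x, (forall p, p \in E -> val' p = minval G val' p) &
      (forall x, x \notin E -> val' x = val x)].
Proof.
move=> hp; elim: hp => {Q val val'} [val|Q val val' u uQ _ _ IH] ok QE hN hK hJ.
  by split=> // p pE; apply: hJ => //; rewrite inE.
have uE : u \in E by apply: (subsetP QE).
rewrite /upd_UB in IH.
case: ifP IH => hlt IH.
  set val1 := (fun x => if x == u then minval G val u else val x) in IH.
  have le1 : forall x, val1 x <= val x.
    by rewrite /val1 => x; case: eqP => [->|//]; exact: ltW.
  have m1 : minval G val1 u = minval G val u.
    by apply: minval_ext => a k ka; rewrite /val1 (negbTE (kid_not_self k ka)).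
  have [] := IH ok.
  - apply/subsetP => x; rewrite in_setU in_setD1 => /orP[/andP[_ xQ]|xp].
      exact: (subsetP QE).
    exact: (subsetP (parentsOf_sub u ok)).
  - by move=> x; rewrite /val1; case: eqP => _ //; apply: minval_Noo.
  - move=> p pE; case: eqP => [->|_]; first by rewrite m1.
    exact: le_trans (minval_mono le1) (hK p pE).
  - move=> p pE; rewrite in_setU in_setD1 negb_or => /andP[]; rewrite negb_and negbK.
    move=> /orP[/eqP->|pQ] np; first by rewrite /val1 eqxx m1.
    rewrite /val1; case: eqP => [->|_]; first by rewrite m1.
    rewrite hJ //; apply: minval_ext => a k ka.
    by rewrite (negbTE (notparent k ok np ka)).
  - move=> h1 h2 h3; split=> // x xE; rewrite h3 // /val1.
    by case: eqP => // xu; move: xE; rewrite xu uE.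
have [] := IH ok.
- by apply/subsetP => x; rewrite in_setD1 => /andP[_ /(subsetP QE)].
- exact: hN.
- exact: hK.
- move=> p pE; rewrite in_setD1 negb_and negbK => /orP[/eqP->|pQ]; last exact: hJ.
  by apply/le_anti; rewrite hK // leNgt hlt.
- by move=> h1 h2 h3; split.
Qed.

Arguments propagate_UB {G E Q val val'}.
Record Inv (s : sstate) : Prop := {
  i_root : OrN root \in Gp s;
  i_and : forall a, AndN a \in Gp s -> [/\ a.1 \in Ex s, edge (OrN a.1) (AndN a),
            OrN (child a false) \in Gp s & OrN (child a true) \in Gp s];
  i_term : forall o, TermN o \in Gp s -> o \in Ex s;
  i_ex : forall o, o \in Ex s -> TermN o \in Gp s /\ OrN o \in Gp s;
  i_unex : forall o, o \notin Ex s -> UB s o = +oo;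
  i_min : forall o, o \in Ex s -> UB s o = minval (Gp s) (UB s) o;
  i_Noo : forall o, -oo < UB s o;
  i_rootex : Ex s = finset.set0 \/ root \in Ex s }.

Arguments i_root {s}. Arguments i_and {s} _ {a}. Arguments i_term {s} _ {o}. Arguments i_ex {s} _ {o}.
Arguments i_unex {s} _ {o}. Arguments i_min {s} _ {o}. Arguments i_Noo {s}. Arguments i_rootex {s}.

Lemma Inv_init : Inv (@init_state R N F Y rho1 rho0 alpha beta).
Proof.
split => /=; [by rewrite inE| by move=> a; rewrite inE | by move=> o; rewrite inE
  | by move=> o; rewrite inE | by [] | by move=> o; rewrite inE
  | by move=> o; rewrite ltNye | by left].
Qed.

Lemma descend_props (s : sstate) o o' : Inv s -> descend X alpha beta s o o' ->
  OrN o \in Gp s -> o' \notin Ex s /\ OrN o' \in Gp s.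
Proof.
move=> hI hd; elim: hd => {o o'} [o oE oG|o a o1 o2 oE ka _ -> _ IH oG] //.
apply: IH; case/andP: ka => _ /(i_and hI) [_ _ h0 h1].
by case: ifP.
Qed.

Lemma descend_empty (s : sstate) o o' : Ex s = finset.set0 ->
  descend X alpha beta s o o' -> o' = o.
Proof. by move=> h0; case=> // o1 a o2 o3; rewrite h0 inE. Qed.

Arguments descend_props {s o o'}.
Arguments descend_empty {s o o'}.

Lemma iter_Inv (s s' : sstate) : Inv s -> iteration X Y rho1 rho0 alpha beta s s' ->
  Inv s' /\ (Ex s' != finset.set0).
Proof.
move=> hI [o [hd [LB' [UB' [_ [hp ->]]]]]].
have [oE oG] := descend_props hI hd (i_root hI).
set s2 := Defs.expand X Y rho1 rho0 alpha beta s o in hp *.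
have memG2 : forall v, (v \in Gp s2) = [|| v \in Gp s, v == TermN o |
   [exists a, edge (OrN o) (AndN a) &&
      [|| v == AndN a, v == OrN (child a false) | v == OrN (child a true)]]].
  by move=> v; rewrite /s2 /= !inE orbA.
have GG2 : forall v, v \in Gp s -> v \in Gp s2 by move=> v vG; rewrite memG2 vG.
have memE2 : forall p, (p \in Ex s2) = (p == o) || (p \in Ex s) by move=> p; rewrite /s2 /= in_setU1.
have andG2 : forall a, AndN a \in Gp s2 -> AndN a \in Gp s \/ edge (OrN o) (AndN a).
  move=> a; rewrite memG2 => /or3P[->|//|/existsP[a' /andP[ep]]]; first by left.
  by rewrite /= orbF => /eqP[->]; right.
have kidA_same : forall p a, p \in Ex s -> kidA (Gp s2) p a = kidA (Gp s) p a.
  move=> p a pE; rewrite /Defs.kidA; case ep: (edge _ _) => //=.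
  apply/idP/idP => [h|]; last exact: GG2.
  case: (andG2 a h) => // /edge_OA[e1 _ _]; have [e2 _ _] := edge_OA ep.
  by move: pE oE; rewrite -e2 e1 => ->.
have minval_same : forall p val, p \in Ex s -> minval (Gp s2) val p = minval (Gp s) val p.
  by move=> p val pE; apply: eq_bigl => a; rewrite kidA_same.
have ok : prop_ok (Gp s2) (Ex s2).
  split.
    move=> p; rewrite memE2 => /orP[/eqP->|pE]; first exact: GG2.
    by apply: GG2; have [] := i_ex hI pE.
  move=> a /andG2 [aG|ep].
    by have [h1 h2 _ _] := i_and hI aG; split => //; rewrite memE2 h1 orbT.
  by have [e1 _ _] := edge_OA ep; rewrite e1 memE2 eqxx; split.
have [] := propagate_UB hp ok.
- by apply/subsetP => x; rewrite inE => /eqP->; rewrite memE2 eqxx.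
- exact: (i_Noo hI).
- move=> p; rewrite memE2 => /orP[/eqP->|pE]; first by rewrite /s2 /= (i_unex hI oE) leey.
  by rewrite /s2 /= minval_same // -(i_min hI pE).
- move=> p; rewrite memE2 inE => /orP[/eqP->|pE]; first by rewrite eqxx.
  by rewrite /s2 /= minval_same // -(i_min hI pE).
move=> hN' hM' hU'.
have UB2 : UB s2 = UB s by [].
clearbody s2.
split; last by apply/eqP => /setP /(_ o); rewrite /= memE2 eqxx in_set0.
split => //=.
- exact: GG2 (i_root hI).
- move=> a /andG2 [aG|ep].
    have [h1 h2 h3 h4] := i_and hI aG.
    by split => //; rewrite ?GG2 // memE2 h1 orbT.
  have [e1 e2 e3] := edge_OA ep.
  split.
  + by rewrite memE2 e1 eqxx.
  + by rewrite /= e1 eqxx e2 e3.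
  + by rewrite memG2; apply/or3P; apply: Or33; apply/existsP; exists a; rewrite ep eqxx !orbT.
  + by rewrite memG2; apply/or3P; apply: Or33; apply/existsP; exists a; rewrite ep eqxx !orbT.
- move=> o'; rewrite memG2 => /or3P[/(i_term hI) h|/eqP[->]|/existsP[a' /andP[_]]].
  + by rewrite memE2 h orbT.
  + by rewrite memE2 eqxx.
  + by [].
- move=> o'; rewrite memE2 => /orP[/eqP->|pE].
    by rewrite !memG2 eqxx oG !orbT.
  by have [h1 h2] := i_ex hI pE; rewrite !GG2.
- move=> o'; rewrite memE2 negb_or => /andP[no nE].
  rewrite hU'; last by rewrite memE2 negb_or no nE.
  by rewrite UB2 (i_unex hI nE).
- right; case: (i_rootex hI) => [e0|rE]; last by rewrite memE2 rE orbT.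
  by rewrite memE2 (descend_empty e0 hd) eqxx.
Qed.
Local Open Scope ring_scope.

Lemma sumU (A B : {set node}) (f : node -> R) : [disjoint A & B] ->
  \sum_(v in A :|: B) f v = \sum_(v in A) f v + \sum_(v in B) f v.
Proof. by move=> d; rewrite -bigU //; apply: eq_bigl => x; rewrite !inE. Qed.

Lemma sumU_cond (A B : {set node}) (P : pred node) (f : node -> R) : [disjoint A & B] ->
  \sum_(v in A :|: B | P v) f v = \sum_(v in A | P v) f v + \sum_(v in B | P v) f v.
Proof. by move=> d; rewrite !big_mkcondr; apply: sumU. Qed.

Lemma ecost0 u v : edge u v -> nset u != nset v -> ecost u v = 0.
Proof.
case: u => [o|o|a] e; last by case: v e.
- by rewrite (edge_O_nset e) /= eqxx.
- by case: v e.
Qed.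

Lemma sep_disj (A B : {set node}) : (forall x y, x \in A -> y \in B -> nset x != nset y) ->
  [disjoint A & B].
Proof.
move=> h; rewrite -setI_eq0; apply/eqP/setP => x; rewrite !inE.
by apply/negP => /andP[xA xB]; have := h x x xA xB; rewrite eqxx.
Qed.

Lemma solcost_U (A B : {set node}) :
  (forall x y, x \in A -> y \in B -> nset x != nset y) ->
  solcost (A :|: B) = solcost A + solcost B.
Proof.
move=> h; have d := sep_disj _ _ h.
rewrite /Defs.solcost sumU //; congr (_ + _); apply: eq_bigr => u uX.
- rewrite sumU_cond // [X in _ + X]big1 ?addr0 //.
  move=> v /andP[vB e]; exact: ecost0 e (h _ _ uX vB).
- rewrite sumU_cond // [X in X + _]big1 ?add0r //.
  move=> v /andP[vA e]; apply: ecost0 e _.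
  by rewrite eq_sym; apply: h.
Qed.

Lemma sum_single (S : {set node}) (P : pred node) (c : node) (f : node -> R) :
  [set v in S | P v] = [set c] -> \sum_(v in S | P v) f v = f c.
Proof.
move=> H; transitivity (\sum_(v in [set c]) f v); last by rewrite big_set1.
by rewrite -H; apply: eq_bigl => v; rewrite !inE.
Qed.

Lemma pair_children (u : onode) (w : node) : edge (OrN u) w ->
  [set v in [set OrN u; w] | edge (OrN u) v] = [set w].
Proof.
move=> e; have wu : w != OrN u by case: w e.
apply/setP => v; rewrite in_set in_setU1 !in_set1.
case: (eqVneq v (OrN u)) => [->|vu]; first by rewrite andbF eq_sym (negbTE wu).
by case: eqP => [->|_]; [exact: e|].
Qed.

Lemma solcost_pair (u : onode) (w : node) : edge (OrN u) w ->
  solcost [set OrN u; w] = ecost (OrN u) w.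
Proof.
move=> e.
have wu : w != OrN u by case: w e.
rewrite /Defs.solcost /= big_setU1 /=; last by rewrite inE eq_sym.
rewrite big_set1 (@sum_single _ _ w); last exact: pair_children.
have -> : \sum_(v in [set OrN u; w] | edge w v) ecost w v = 0.
  by apply: big1 => v _; case: w e {wu} => [o|o|a] //= _; case: v.
by rewrite addr0.
Qed.
Definition srel (S : {set node}) := [rel x y | [&& edge x y, x \in S & y \in S]].

Lemma srel_mono (S S' : {set node}) x y : S \subset S' ->
  connect (srel S) x y -> connect (srel S') x y.
Proof.
move=> sub; apply: connect_sub => a b /and3P[e aS bS]; apply: connect1.
by rewrite /= e !(subsetP sub).
Qed.

Lemma sep_sets (I0 I1 A B C : {set 'I_N}) : [disjoint I0 & I1] -> A \subset I0 ->
  C \subset I1 -> C \subset B -> C != finset.set0 -> A != B.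
Proof.
move=> d AI CI CB; apply: contra => /eqP AB; rewrite -subset0.
apply/subsetP => i iC; have h1 := subsetP CI i iC.
have h0 : i \in I0 by apply: (subsetP AI); rewrite AB; exact: (subsetP CB).
by move: d; rewrite -setI_eq0 => /eqP/setP/(_ i); rewrite inE h0 h1 inE.
Qed.

Arguments sep_sets {I0 I1 A B C}.

Lemma UB_fin_sum (x y : \bar R) (t : R) : (-oo < x)%E -> (-oo < y)%E ->
  (x + y < t%:E)%E -> x != +oo%E.
Proof.
move=> hx hy; apply: contraTN => /eqP ->.
by rewrite addye -?ltNye //; rewrite ltNge leey.
Qed.

Local Open Scope ereal_scope.

Lemma getSol_props (s : sstate) u S : Inv s -> getSolution s u S -> u \in Ex s ->
  [/\ S \subset Gp s, OrN u \in S, (forall v, v \in S -> nset v \subset u.1),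
      (u.1 != finset.set0 -> forall v, v \in S -> nset v != finset.set0) &
   [/\ (forall v, v \in S -> connect (srel S) (OrN u) v),
       (forall a v, AndN a \in S -> edge (AndN a) v -> v \in S),
       (forall o, OrN o \in S -> #|[set v in S | edge (OrN o) v]| = 1%N) &
       (solcost S)%:E = UB s u]].
Proof.
move=> hI hg; elim: hg => {u S} [u hle|u a S0 S1 hlt ka hval g0 IH0 g1 IH1] uE.
- have [tG oG] := i_ex hI uE.
  have eT : edge (OrN u) (TermN u) by rewrite /= eqxx.
  have memS : forall v, (v \in [set OrN u; TermN u]) = (v == OrN u) || (v == TermN u).
    by move=> v; rewrite in_setU1 in_set1.
  split.
  + by apply/subsetP => v; rewrite memS => /orP[]/eqP->.
  + by rewrite memS eqxx.
  + by move=> v; rewrite memS => /orP[]/eqP->.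
  + by move=> h v; rewrite memS => /orP[]/eqP->.
  split.
  + move=> v; rewrite memS => /orP[]/eqP->; first exact: connect0.
    by apply: connect1; apply/and3P; split; rewrite ?memS ?eqxx ?orbT.
  + by move=> a v; rewrite memS => /orP[]/eqP.
  + move=> o; rewrite memS => /orP[]/eqP // [->].
    by rewrite pair_children // cards1.
  + rewrite (solcost_pair _ _ eT) (i_min hI uE) minval_minUB min_l //.
- have [kaE aG] := andP ka.
  have [_ oGu] := i_ex hI uE.
  have [e1 e2 e3] := edge_OA kaE.
  have hU : UB s u = (acost a)%:E + valA (UB s) a.
    by rewrite (i_min hI uE) minval_minUB min_r ?(ltW hlt) // hval.
  have hlt2 : (acost a)%:E + valA (UB s) a < (tcost u)%:E by rewrite hval.
  have hfin : forall k, UB s (child a k) != +oo.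
    move=> k; have hA : valA (UB s) a != +oo.
      apply: (UB_fin_sum (valA (UB s) a) ((acost a)%:E) (tcost u)).
      - by rewrite /Defs.valA; apply: Noo_add; apply: (i_Noo hI).
      - exact: ltNyr.
      - by rewrite addeC.
    move: hA; rewrite /Defs.valA; case: k.
      apply: contra => /eqP h; rewrite h addey // -ltNye; exact: (i_Noo hI).
    by apply: contra => /eqP h; rewrite h addye // -ltNye; exact: (i_Noo hI).
  have cE : forall k, child a k \in Ex s.
    by move=> k; apply: contraR (hfin k) => nE; rewrite (i_unex hI nE).
  have [s0G c0S n0 ne0 [con0 and0 cnt0 cost0]] := IH0 (cE false).
  have [s1G c1S n1 ne1 [con1 and1 cnt1 cost1]] := IH1 (cE true).
  have av : a.2 \in Vset a.1.1 by rewrite e1.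
  have cne : forall k, (child a k).1 != finset.set0 by move=> k; exact: child_nonempty.
  have csub : forall k, (child a k).1 \subset u.1 by move=> k; rewrite -e1; exact: child_sub.
  have d01 := child_disj a.
  have d10 : [disjoint (child a true).1 & (child a false).1] by rewrite disjoint_sym.
  have ne0' := ne0 (cne false); have ne1' := ne1 (cne true).
  have sep01 : forall x y, x \in S0 -> y \in S1 -> nset x != nset y.
    by move=> x y xS yS; apply: (sep_sets d01 (n0 x xS) (n1 y yS) (subxx _)); apply: ne1'.
  have sepu0 : forall x, x \in S0 -> nset x != u.1.
    by move=> x xS; apply: (sep_sets d01 (n0 x xS) (subxx _) (csub true)).
  have sepu1 : forall x, x \in S1 -> nset x != u.1.
    by move=> x xS; apply: (sep_sets d10 (n1 x xS) (subxx _) (csub false)).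
  have memP : forall v, (v \in [set OrN u; AndN a]) = (v == OrN u) || (v == AndN a).
    by move=> v; rewrite in_setU1 in_set1.
  have nP : forall v, v \in [set OrN u; AndN a] -> nset v = u.1.
    by move=> v; rewrite memP => /orP[]/eqP-> //=; rewrite e1.
  have memS : forall v, (v \in [set OrN u; AndN a] :|: S0 :|: S1) =
      [|| v \in [set OrN u; AndN a], v \in S0 | v \in S1].
    by move=> v; rewrite !in_setU orbA.
  split.
  + apply/subsetP => v; rewrite memS => /or3P[|/(subsetP s0G)|/(subsetP s1G)] //.
    by rewrite memP => /orP[]/eqP->.
  + by rewrite memS memP eqxx.
  + move=> v; rewrite memS => /or3P[/nP->|vS|vS] //.
    * exact: subset_trans (n0 v vS) (csub false).
    * exact: subset_trans (n1 v vS) (csub true).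
  + move=> hu v; rewrite memS => /or3P[/nP->|vS|vS] //; [exact: ne0'|exact: ne1'].
  have SS0 : S0 \subset [set OrN u; AndN a] :|: S0 :|: S1.
    by apply/subsetP => v vS; rewrite memS vS orbT.
  have SS1 : S1 \subset [set OrN u; AndN a] :|: S0 :|: S1.
    by apply/subsetP => v vS; rewrite memS vS !orbT.
  have uS : OrN u \in [set OrN u; AndN a] :|: S0 :|: S1 by rewrite memS memP eqxx.
  have aS : AndN a \in [set OrN u; AndN a] :|: S0 :|: S1 by rewrite memS memP eqxx orbT.
  have cua : connect (srel ([set OrN u; AndN a] :|: S0 :|: S1)) (OrN u) (AndN a).
    by apply: connect1; apply/and3P; split.
  split.
  + move=> v; rewrite memS => /or3P[|vS|vS].
    * by rewrite memP => /orP[]/eqP->; [exact: connect0|].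
    * apply: (@connect_trans _ _ (OrN (child a false))); last exact: srel_mono SS0 (con0 v vS).
      apply: (@connect_trans _ _ (AndN a) _ _ cua); apply: connect1; apply/and3P; split => //.
        exact: edge_child.
      exact: (subsetP SS0).
    * apply: (@connect_trans _ _ (OrN (child a true))); last exact: srel_mono SS1 (con1 v vS).
      apply: (@connect_trans _ _ (AndN a) _ _ cua); apply: connect1; apply/and3P; split => //.
        exact: edge_child.
      exact: (subsetP SS1).
  + move=> a' v aS' e; move: aS'; rewrite memS => /or3P[|vS|vS].
    * rewrite memP => /orP[]/eqP // [ea]; subst a'.
      case: v e => [o||] //= /orP[]/eqP->.
        by rewrite (subsetP SS0).
      by rewrite (subsetP SS1).
    * by rewrite (subsetP SS0) // (and0 a').
    * by rewrite (subsetP SS1) // (and1 a').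
  + move=> o; rewrite memS => /or3P[|oS|oS].
    * rewrite memP => /orP[]/eqP // [->].
      rewrite (_ : [set v in _ | _] = [set AndN a]) ?cards1 //; apply/setP => v.
      rewrite in_set memS in_set1 memP.
      case: (eqVneq v (AndN a)) => [->|va]; first by rewrite orbT kaE.
      rewrite orbF; case: (eqVneq v (OrN u)) => [->|vu] //=.
      apply/negP => /andP[/orP[vS|vS] ev]; have := edge_O_nset ev.
        by move/eqP; rewrite (negbTE (sepu0 v vS)).
      by move/eqP; rewrite (negbTE (sepu1 v vS)).
    * rewrite (_ : [set v in _ | edge (OrN o) v] = [set v in S0 | edge (OrN o) v]) ?(cnt0 o oS) //.
      apply/setP => v.
      rewrite in_set [RHS]in_set memS; case: (boolP (v \in S0)) => vS; first by rewrite orbT.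
      apply/negP => /andP[/or3P[vP|//|vS1] ev]; have := edge_O_nset ev.
        by rewrite (nP v vP) => h; have := sepu0 (OrN o) oS; rewrite /= -h eqxx.
      by move=> h; have := sep01 (OrN o) v oS vS1; rewrite /= -h eqxx.
    * rewrite (_ : [set v in _ | edge (OrN o) v] = [set v in S1 | edge (OrN o) v]) ?(cnt1 o oS) //.
      apply/setP => v.
      rewrite in_set [RHS]in_set memS; case: (boolP (v \in S1)) => vS; first by rewrite !orbT.
      apply/negP => /andP[/or3P[vP|vS0|//] ev]; have := edge_O_nset ev.
        by rewrite (nP v vP) => h; have := sepu1 (OrN o) oS; rewrite /= -h eqxx.
      by move=> h; have := sep01 v (OrN o) vS0 oS; rewrite /= -h eqxx.
  + rewrite solcost_U; last first.
      move=> x y; rewrite in_setU => /orP[xP|xS] yS; last exact: sep01.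
      by rewrite (nP x xP) eq_sym; apply: sepu1.
    rewrite solcost_U; last by move=> x y xP yS; rewrite (nP x xP) eq_sym; apply: sepu0.
    rewrite (solcost_pair _ _ kaE) hU /Defs.valA -cost0 -cost1 /=.
    by rewrite !EFinD addeA.
Qed.
Local Open Scope ring_scope.

Section Lower.
Variables (s : sstate) (S : {set node}).
Hypotheses (hI : Inv s) (hS : is_solution X S) (hSG : S \subset Gp s).

Lemma pred_ex v : v \in S -> v != OrN root -> exists2 z, z \in S & edge z v.
Proof.
case: hS => _ _ con _ _ vS nr; have := con v vS.
case/connectP => p pth lst.
move: pth lst; case/lastP: p => [|p' y] pth lst.
  by rewrite lst eqxx in nr.
move: pth; rewrite rcons_path => /andP[_ /and3P[e zS yS]].
rewrite last_rcons in lst; subst y.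
by exists (last (OrN root) p').
Qed.

Arguments pred_ex {v}.

Lemma or_child o : OrN o \in S -> exists c, [set v in S | edge (OrN o) v] = [set c].
Proof. by case: hS => _ _ _ _ cnt oS; apply/cards1P; rewrite cnt. Qed.

Arguments or_child {o}.

Lemma child_uniq o w1 w2 : OrN o \in S -> w1 \in S -> w2 \in S ->
  edge (OrN o) w1 -> edge (OrN o) w2 -> w1 = w2.
Proof.
move=> oS w1S w2S e1 e2; have [c Hc] := or_child oS.
have : w1 \in [set v in S | edge (OrN o) v] by rewrite in_set w1S e1.
have : w2 \in [set v in S | edge (OrN o) v] by rewrite in_set w2S e2.
by rewrite Hc !in_set1 => /eqP-> /eqP->.
Qed.

Arguments child_uniq {o w1 w2}.

Lemma or_ex o : OrN o \in S -> o \in Ex s.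
Proof.
move=> oS; have [c Hc] := or_child oS.
have : c \in [set v in S | edge (OrN o) v] by rewrite Hc in_set1.
rewrite in_set => /andP[cS e]; have cG := subsetP hSG c cS.
case: c e cG {Hc cS} => [o'|o'|a] //=.
  by move=> /eqP-> /(i_term hI).
by move=> e /(i_and hI) [h _ _ _]; have [<- _ _] := edge_OA e.
Qed.

Arguments or_ex {o}.

Lemma and_props a : AndN a \in S -> [/\ OrN a.1 \in S, (a.1.2 < F)%N & a.2 \in Vset a.1.1].
Proof.
move=> aS; have [_ e _ _] := i_and hI (subsetP hSG _ aS).
have [_ h2 h3] := edge_OA e; split => //.
have [z zS ez] := pred_ex aS isT.
by case: z zS ez => [o|o|a'] //= zS /and3P[/eqP ea _ _]; rewrite ea.
Qed.

Arguments and_props {a}.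

Lemma or_parent o : OrN o \in S -> o != root ->
  exists a k, [/\ AndN a \in S, o = child a k & (o.2 : nat) = a.1.2.+1].
Proof.
move=> oS nr; have onr : OrN o != OrN root by apply: contra nr => /eqP[->].
have [z zS ez] := pred_ex oS onr.
case: z zS ez => [o'|o'|a] //= aS.
have [_ lt _] := and_props aS.
by case/orP => /eqP ->; [exists a, false|exists a, true]; split => //; rewrite child_depth.
Qed.

Arguments or_parent {o}.

Lemma disj_depth n : forall o o', OrN o \in S -> OrN o' \in S -> (o.2 : nat) = n ->
  (o'.2 : nat) = n -> o != o' -> [disjoint o.1 & o'.1].
Proof.
elim: n => [|n IH] o o' oS o'S ho ho' ne.
  have er : forall x : onode, OrN x \in S -> (x.2 : nat) = 0%N -> x = root.
    move=> x xS hx; apply/eqP; apply: contraT => nr.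
    by have [a [k [_ _ hd]]] := or_parent xS nr; rewrite hd in hx.
  by rewrite (er o oS ho) (er o' o'S ho') eqxx in ne.
have nr : forall x : onode, (x.2 : nat) = n.+1 -> x != root.
  by move=> x hx; apply/eqP => ex; move: hx; rewrite ex.
have [a [k [aS eo hd]]] := or_parent oS (nr o ho).
have [a' [k' [aS' eo' hd']]] := or_parent o'S (nr o' ho').
have [pS plt pV] := and_props aS; have [pS' plt' pV'] := and_props aS'.
case: (eqVneq a.1 a'.1) => [ep|np].
  have ea : AndN a = AndN a'.
    apply: (child_uniq pS aS) => //; first by rewrite /= eqxx plt pV.
    by rewrite ep /= eqxx plt' pV'.
  case: ea => ea; subst a'.
  case: k k' eo eo' => [] [] -> -> in ne *; rewrite ?eqxx // in ne.
    by rewrite disjoint_sym; exact: child_disj.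
  exact: child_disj.
have := IH a.1 a'.1 pS pS' _ _ np.
rewrite hd in ho; rewrite hd' in ho'.
move=> /(_ (eq_add_S _ _ ho) (eq_add_S _ _ ho')) d.
rewrite eo eo'; apply: disjointWl (child_sub a k) _.
by apply: disjointWr (child_sub a' k') _.
Qed.

Arguments disj_depth {n o o'}.

Lemma parent_uniq w a a' k k' : AndN a \in S -> AndN a' \in S ->
  w = child a k -> w = child a' k' -> a = a'.
Proof.
move=> aS aS' e e'.
have [pS plt pV] := and_props aS; have [pS' plt' pV'] := and_props aS'.
case: (eqVneq a.1 a'.1) => [ep|np].
  have : AndN a = AndN a'.
    apply: (child_uniq pS aS) => //; first by rewrite /= eqxx plt pV.
    by rewrite ep /= eqxx plt' pV'.
  by case.
have hd := child_depth k plt; have hd' := child_depth k' plt'.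
rewrite -e in hd; rewrite -e' in hd'.
have d := disj_depth pS pS' (erefl _) (eq_add_S _ _ (etrans (esym hd') hd)) np.
have ne := child_nonempty a k pV.
rewrite -e in ne; move: ne; apply: contraNeq => _.
rewrite -subset0; apply/subsetP => i iw.
have i1 : i \in a.1.1 by apply: (subsetP (child_sub a k)); rewrite -e.
have i2 : i \in a'.1.1 by apply: (subsetP (child_sub a' k')); rewrite -e'.
by move: d; rewrite -setI_eq0 => /eqP/setP/(_ i); rewrite inE i1 i2 inE.
Qed.

Arguments parent_uniq {w a a' k k'}.

Lemma parents_card w : w \in S -> #|[set v in S | edge v w]| = (w != OrN root) :> nat.
Proof.
move=> wS.
case: (eqVneq w (OrN root)) => [->|nr] /=.
  apply/eqP; rewrite cards_eq0; apply/eqP/setP => v; rewrite in_set inE.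
  apply/negP => /andP[vS e].
  case: v vS e => [o|o|a] //= aS /orP[] /eqP h.
    have [_ lt _] := and_props aS.
    by have := child_depth (a:=a) false lt; rewrite -h.
  have [_ lt _] := and_props aS.
  by have := child_depth (a:=a) true lt; rewrite -h.
have [z zS ez] := pred_ex wS nr.
apply/eqP/cards1P; exists z; apply/setP => v; rewrite in_set in_set1.
apply/idP/idP => [/andP[vS ev]|/eqP->]; last by rewrite zS ez.
case: w wS nr ez ev => [o|o|a] wS nr.
- case: z zS => [|| a] // zS ez; case: v vS => [|| a'] // vS ev.
  have [k ek] : exists k, o = child a k by case/orP: ez => /eqP ->; [exists false|exists true].
  have [k' ek'] : exists k, o = child a' k by case/orP: ev => /eqP ->; [exists false|exists true].
  by rewrite (parent_uniq vS zS ek' ek).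
- by case: z zS => [o'|o'|a] // _ /eqP ->; case: v vS => [o''|o''|a'] // _ /eqP ->.
- by case: z zS => [o'|o'|a'] // _ /and3P[/eqP <- _ _]; case: v vS => [o''|o''|a''] // _ /and3P[/eqP <- _ _].
Qed.

Definition Phi (v : node) : R :=
  match v with
  | OrN o => fine (UB s o)
  | TermN _ => 0
  | AndN a => fine (UB s (child a false)) + fine (UB s (child a true))
  end.

Lemma fin_ex o : o \in Ex s -> UB s o = (fine (UB s o))%:E.
Proof.
move=> oE; rewrite fineK // fin_numElt (i_Noo hI) /=.
rewrite (i_min hI oE); apply: le_lt_trans (minval_le_tcost _ _ _) _.
exact: ltry.
Qed.

Arguments fin_ex {o}.

Lemma local_ineq v : v \in S ->
  Phi v - \sum_(w in S | edge v w) Phi w <= \sum_(w in S | edge v w) ecost v w.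
Proof.
move=> vS; case: v vS => [o|o|a] vS.
- have [c Hc] := or_child vS.
  rewrite (sum_single _ _ _ _ Hc) (sum_single _ _ _ _ Hc) lerBlDr.
  have : c \in [set v in S | edge (OrN o) v] by rewrite Hc in_set1.
  rewrite in_set => /andP[cS e].
  have oE := or_ex vS.
  have hm := i_min hI oE.
  rewrite /=; case: c e cS {Hc} => [o'|o'|a] //= e cS.
    rewrite addr0 -lee_fin -(fin_ex oE) hm.
    exact: minval_le_tcost.
  have ka : kidA (Gp s) o a by apply/andP; split => //; exact: (subsetP hSG _ cS).
  have c0 : OrN (child a false) \in S by case: hS => _ _ _ hA _; apply: hA cS (edge_child a false).
  have c1 : OrN (child a true) \in S by case: hS => _ _ _ hA _; apply: hA cS (edge_child a true).
  rewrite -lee_fin -(fin_ex oE) hm !EFinD -(fin_ex (or_ex c0)) -(fin_ex (or_ex c1)).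
  exact: minval_le_kid.
- by rewrite !big1 ?subr0 // => w /andP[_].
- have [pS lt pV] := and_props vS.
  have c0 : OrN (child a false) \in S by case: hS => _ _ _ hA _; apply: hA vS (edge_child a false).
  have c1 : OrN (child a true) \in S by case: hS => _ _ _ hA _; apply: hA vS (edge_child a true).
  rewrite [X in _ <= X]big1; last by move=> w _; case: w.
  have -> : \sum_(w in S | edge (AndN a) w) Phi w =
      \sum_(w in [set OrN (child a false); OrN (child a true)]) Phi w.
    apply: eq_bigl => w; rewrite in_setU1 in_set1.
    case: w => [o|o|a'] /=; last 2 first.
    - by rewrite andbF; do 2?case: eqP.
    - by rewrite andbF; do 2?case: eqP.
    case: (boolP (o == child a false)) => [/eqP->|h0]; first by rewrite c0 eqxx.
    case: (boolP (o == child a true)) => [/eqP->|h1]; first by rewrite c1 !eqxx !orbT.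
    rewrite andbF; apply/esym/norP.
    by split; apply/eqP => -[e]; [rewrite e eqxx in h0|rewrite e eqxx in h1].
  rewrite big_setU1 /= ?big_set1 ?subrr //.
  rewrite in_set1; apply: contraNneq (child_neq a pV) => -[h].
  by rewrite /Defs.child h.
Qed.

Lemma lower_bound : fine (UB s root) <= solcost S.
Proof.
have rS : OrN root \in S by case: hS.
have H1 : \sum_(v in S) (Phi v - \sum_(w in S | edge v w) Phi w) <=
    \sum_(v in S) \sum_(w in S | edge v w) ecost v w.
  by apply: ler_sum => v vS; exact: local_ineq.
rewrite sumrB in H1.
have Ex1 : \sum_(v in S) \sum_(w in S | edge v w) Phi w =
    \sum_(w in S) \sum_(v in S | edge v w) Phi w.
  rewrite (eq_bigr (fun v => \sum_(w in S) (if edge v w then Phi w else 0))); last first.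
    by move=> v _; rewrite big_mkcondr.
  rewrite exchange_big /=; apply: eq_bigr => w _; rewrite [RHS]big_mkcondr.
  by [].
have Ex2 : \sum_(w in S) \sum_(v in S | edge v w) Phi w = \sum_(w in S) Phi w - Phi (OrN root).
  rewrite (eq_bigr (fun w => Phi w *+ (w != OrN root))); last first.
    move=> w wS; rewrite -(parents_card w wS) -sumr_const.
    by apply: eq_bigl => v; rewrite in_set.
  rewrite [in RHS](bigD1 (OrN root)) //= (bigD1 (OrN root)) //= eqxx mulr0n add0r.
  rewrite addrAC subrr add0r; apply: eq_bigr => w /andP[_ ->]; exact: mulr1n.
rewrite Ex1 Ex2 opprB addrC subrK in H1.
exact: H1.
Qed.

End Lower.
Arguments iter_Inv {s s'}.
Arguments getSol_props {s u S}.
Arguments lower_bound {s S}.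

Lemma run_Inv k (run : nat -> sstate) :
  run 0%N = @init_state R N F Y rho1 rho0 alpha beta ->
  (forall i, (i < k)%N ->
     guard (run i) /\ iteration X Y rho1 rho0 alpha beta (run i) (run i.+1)) ->
  forall i, (i <= k)%N -> Inv (run i) /\ ((0 < i)%N -> Ex (run i) != finset.set0).
Proof.
move=> h0 hit; elim=> [|i IH] hi.
  by rewrite h0; split => //; exact: Inv_init.
have [hI _] := IH (ltnW hi).
have [_ hst] := hit i hi.
by have [hI' hne] := iter_Inv hI hst; split.
Qed.

Lemma main_result k (run : nat -> sstate) :
  run 0%N = @init_state R N F Y rho1 rho0 alpha beta ->
  (forall i, (i < k)%N ->
     guard (run i) /\ iteration X Y rho1 rho0 alpha beta (run i) (run i.+1)) ->
  (0 < k)%N ->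
  forall S, getSolution (run k) root S ->
    [/\ is_solution X S, S \subset Gp (run k) &
        forall S', is_solution X S' -> S' \subset Gp (run k) ->
          solcost S <= solcost S'].
Proof.
move=> h0 hit kpos S hg.
have [hI hne] := run_Inv k run h0 hit k (leqnn k).
have rE : root \in Ex (run k).
  case: (i_rootex hI) => // e; by rewrite e eqxx in hne; have := hne kpos.
have [sub uS _ _ [con andc cnt cost]] := getSol_props hI hg rE.
split => //.
- split => // v vS.
  rewrite /Defs.inG; apply: (connect_sub _ (con v vS)) => x y /and3P[e _ _].
  exact: connect1 e.
- move=> S' hS' hSG'.
  have := lower_bound hI hS' hSG'.
  by rewrite -cost.
Qed.

End Proof.

Theorem theorem12 (R : realType) (N F : nat) (X : 'I_N -> 'I_F -> bool) (Y : 'I_N -> bool)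
    (rho1 rho0 alpha beta : R)
    (hrho1 : 0 < rho1) (hrho0 : 0 < rho0) (halpha : 0 < alpha < 1) (hbeta : 0 <= beta)
    (k : nat) (run : nat -> @state R N F) :
  run 0%N = @init_state R N F Y rho1 rho0 alpha beta ->
  (forall i, (i < k)%N ->
     guard (run i) /\ iteration X Y rho1 rho0 alpha beta (run i) (run i.+1)) ->
  (0 < k)%N ->
  guard (run k) ->
  forall S, getSolution X Y rho1 rho0 alpha beta (run k) (mroot N F) S ->
    [/\ is_solution X S, S \subset Gp (run k) &
        forall S', is_solution X S' -> S' \subset Gp (run k) ->
          solcost X Y rho1 rho0 alpha beta S <= solcost X Y rho1 rho0 alpha beta S'].
Proof.
move=> h0 hit kpos _ S hg.
by apply: main_result.
Qed.
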